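(* There is no novel partition of length $3$.
   Context: An integer partition is $\lambda=(\lambda_1,\dots,\lambda_k)$ with integers $\lambda_1\ge\dots\ge\lambda_k\ge 1$; $k$ is its length. For $v\in\mathbb{Z}^k$ let $v^{\perp B}=\{x\in\{-1,1\}^k: v\cdot x=0\}$; $\lambda^{\perp B}$ is this set for $(\lambda_1,\dots,\lambda_k)$. $V_\lambda\subset\mathbb{Z}^k$ is the set of vectors obtained from $(\lambda_1,\dots,\lambda_k)$ by permuting coordinates and changing signs of some coordinates, with first coordinate positive. For $I\subset\{1,\dots,m\}$, $\mathrm{Proj}_I:\{-1,1\}^m\to\{-1,1\}^{|I|}$ keeps the coordinates indexed by $I$. Reduction: for partitions $\mu$ of length $m$ and $\lambda$ of length $k\le m$, $\mu\Rightarrow\lambda$ iff there exist $I\subset\{1,\dots,m\}$, $|I|=k$, and $v\in V_\lambda$ with $\mathrm{Proj}_I(\mu^{\perp B})\subset v^{\perp B}$. $\mu$ strictly reduces to $\lambda$ iff $\mu\Rightarrow\lambda$ and not $\lambda\Rightarrow\mu$. Partitions $\lambda,\mu$ of the same length are equivalent iff there is $w\in V_\mu$ with $\lambda^{\perp B}=w^{\perp B}$. A partition $\lambda$ is novel iff $\lambda^{\perp B}\neq\emptyset$, $\lambda$ strictly reduces to no partition, and $\lambda$ is lexicographically smallest among partitions equivalent to it. *)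

(* Defs.v *)
From HB Require Import structures.
From mathcomp Require Import all_boot all_order all_algebra.
Set Implicit Arguments. Unset Strict Implicit. Unset Printing Implicit Defensive.
Import Order.TTheory GRing.Theory Num.Theory.

Definition is_partition (l : seq nat) : bool :=
  sorted geq l && all (fun a => 0 < a)%N l.

(* Sign vectors in {-1,1}^k are encoded as boolean sequences of size k:
   true stands for +1 and false for -1. *)
Fixpoint dotB (v : seq int) (x : seq bool) : int :=
  match v, x with
  | a :: v', b :: x' => ((if b then a else - a) + dotB v' x')%R
  | _, _ => 0%R
  end.

Definition perpB (v : seq int) (x : seq bool) : bool :=
  (size x == size v) && (dotB v x == 0%R).

Definition lamZ (l : seq nat) : seq int := map Posz l.

Definition inV (l : seq nat) (v : seq int) : Prop :=
  exists p : seq nat, perm_eq p l /\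
  exists e : seq bool, size e = size l /\
    v = map (fun ab : nat * bool => if ab.2 then Posz ab.1 else (- Posz ab.1)%R)
            (zip p e) /\
    (0 < head 0%R v)%R.

(* mu => lambda.  The subset I of {1..m} with |I| = k is encoded as a bit mask
   of size m with k true entries; Proj_I is then [mask I]. *)
Definition reduces (mu l : seq nat) : Prop :=
  (size l <= size mu)%N /\
  exists I : seq bool, size I = size mu /\ count id I = size l /\
  exists v : seq int, inV l v /\
    forall x : seq bool, perpB (lamZ mu) x -> perpB v (mask I x).

Definition strictly_reduces (mu l : seq nat) : Prop :=
  reduces mu l /\ ~ reduces l mu.

Definition equivalent (l mu : seq nat) : Prop :=
  size l = size mu /\
  exists w : seq int, inV mu w /\
    forall x : seq bool, perpB (lamZ l) x = perpB w x.

Fixpoint lexleq (s t : seq nat) : bool :=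
  match s, t with
  | [::], _ => true
  | _ :: _, [::] => false
  | a :: s', b :: t' => (a < b)%N || ((a == b) && lexleq s' t')
  end.

Definition novel (l : seq nat) : Prop :=
  is_partition l /\
  (exists x : seq bool, perpB (lamZ l) x) /\
  (forall mu : seq nat, is_partition mu -> ~ strictly_reduces l mu) /\
  (forall mu : seq nat, is_partition mu -> equivalent l mu -> lexleq l mu).

(* Main.v *)
Require Import Defs.
From mathcomp Require Import all_boot all_order all_algebra.
From mathcomp Require Import zify.
Import Order.TTheory GRing.Theory Num.Theory.

Lemma red11 (a b c : nat) : is_partition [:: a; b; c] -> reduces [:: a; b; c] [:: 1; 1]%N.
Proof.
move=> /andP[] /= /and3P[hab hbc _] /and4P[ha hb hc _].
split=> //; exists [:: true; true; false]; split=> //; split=> //.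
exists [:: Posz 1; Posz 1]; split.
  exists [:: 1; 1]%N; split=> //; exists [:: true; true]; split=> //.
move=> [|x1 [|x2 [|x3 [|x4 x]]]] //; rewrite /perpB /= => H.
move: H; case: x1; case: x2; case: x3 => /= /eqP H //; apply/eqP; lia.
Qed.

Theorem mainTheorem7 (l : seq nat) :
  is_partition l -> size l = 3 -> ~ novel l.
Proof.
case: l => [|a [|b [|c [|d l]]]] //= hp _ [_ [_ [H _]]].
apply: (H [:: 1; 1]%N) => //; split; first exact: red11.
by case.
Qed.
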